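(* Let $(\Omega,\mathcal{F},\mathbb{P})$ be a probability space, $\mathcal{G}\subseteq\mathcal{F}$ a sub-$\sigma$-algebra, and $m\in\mathbb{N}$. Let $X:\Omega\to\mathcal{M}_{\mathcal{I}}^{(m)}$ be $\mathcal{G}$-measurable and almost surely bounded, with $X(\omega)=\langle [a_k(\omega),a_k(\omega)]\rangle_{0\le k\le m}$ (degenerate intervals) for all $\omega\in\Omega$, and let $Y:\Omega\to\mathcal{M}_{\mathcal{I}}^{(m)}$ be a random variable. Then $\mathbb{E}[X\otimes Y\mid\mathcal{G}]=X\otimes\mathbb{E}[Y\mid\mathcal{G}]$ almost surely.
   Context: The interval semiring $\mathcal{I}$ has carrier $\{[a,b]:a\le b\}$, $[a,b]+_{\mathcal{I}}[c,d]=[a+c,b+d]$, $[a,b]\cdot_{\mathcal{I}}[c,d]=[\min S,\max S]$ with $S=\{ac,ad,bc,bd\}$. The moment semiring $\mathcal{M}_{\mathcal{I}}^{(m)}$ consists of vectors $\langle u_k\rangle_{0\le k\le m}$ of intervals with pointwise addition $\oplus$ and product $\langle u_k\rangle\otimes\langle v_k\rangle=\big\langle \sum_{i=0}^k\binom{k}{i}\times(u_i\cdot_{\mathcal{I}} v_{k-i})\big\rangle_{0\le k\le m}$ (sums in $+_{\mathcal{I}}$, $n\times u$ meaning the $n$-fold $+_{\mathcal{I}}$-sum of $u$). (Conditional) expectations of $\mathcal{M}_{\mathcal{I}}^{(m)}$-valued random variables are taken componentwise on the interval endpoints (for random variables whose endpoints are integrable). *)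

(* Defs.v *)
From HB Require Import structures.
From mathcomp Require Import all_boot all_order all_algebra.
From mathcomp Require Import all_classical all_reals all_analysis.
Set Implicit Arguments. Unset Strict Implicit. Unset Printing Implicit Defensive.
Import Order.TTheory GRing.Theory Num.Theory.
Local Open Scope classical_set_scope.
Local Open Scope ring_scope.

Section IntervalSemiring.
Variable R : realType.

(* An interval [a,b] is represented by the pair (a,b); the carrier of the
   interval semiring consists of the pairs with a <= b. *)
Definition itv_ok (u : R * R) : Prop := u.1 <= u.2.

Definition izero : R * R := (0, 0).

Definition iadd (u v : R * R) : R * R := (u.1 + v.1, u.2 + v.2).

Definition imul (u v : R * R) : R * R :=
  (Num.min (Num.min (u.1 * v.1) (u.1 * v.2)) (Num.min (u.2 * v.1) (u.2 * v.2)),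
   Num.max (Num.max (u.1 * v.1) (u.1 * v.2)) (Num.max (u.2 * v.1) (u.2 * v.2))).

Definition inmul (n : nat) (u : R * R) : R * R := iter n (iadd u) izero.

Definition mom (m : nat) := 'I_m.+1 -> R * R.

Definition mom_add (m : nat) (u v : mom m) : mom m := fun k => iadd (u k) (v k).

Definition mom_mul (m : nat) (u v : mom m) : mom m := fun k =>
  foldr iadd izero
    [seq inmul 'C(k, i) (imul (u (inord i)) (v (inord (k - i)))) | i <- iota 0 k.+1].

End IntervalSemiring.

Section CondExp.
Context {d : measure_display} {T : measurableType d} {R : realType}.
Local Open Scope ereal_scope.

Definition G_measurable (G : set (set T)) (f : T -> R) : Prop :=
  forall B : set R, measurable B -> G (f @^-1` B).

Definition is_sub_sigma_alg (G : set (set T)) : Prop :=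
  sigma_algebra setT G /\ G `<=` measurable.

Definition is_cond_exp (P : probability T R) (G : set (set T)) (Y Z : T -> R)
  : Prop :=
  [/\ G_measurable G Z,
      P.-integrable setT (EFin \o Z) &
      forall A, G A -> \int[P]_(x in A) (Z x)%:E = \int[P]_(x in A) (Y x)%:E].

Definition is_cond_exp_mom (m : nat) (P : probability T R) (G : set (set T))
  (Y Z : T -> mom R m) : Prop :=
  forall k : 'I_m.+1,
    is_cond_exp P G (fun w => (Y w k).1) (fun w => (Z w k).1) /\
    is_cond_exp P G (fun w => (Y w k).2) (fun w => (Z w k).2).

End CondExp.

(* Main.v *)
Require Import Defs.
From HB Require Import structures.
From mathcomp Require Import all_boot all_order all_algebra.
From mathcomp Require Import all_classical all_reals all_analysis measurable_realfun.
From mathcomp Require Import zify ring lra.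
Import Order.TTheory GRing.Theory Num.Theory.
Local Open Scope classical_set_scope.
Local Open Scope ring_scope.
Section S.
Context {d : measure_display} {T : measurableType d} {R : realType}
  (P : probability T R) {G : set (set T)} (HG : is_sub_sigma_alg G).


Local Notation TG := (g_sigma_algebraType G).

Lemma measG : (@measurable _ TG) = G.
Proof. exact: measurable_g_measurableTypeE HG.1. Qed.

Lemma G_meas {A} : G A -> measurable A.
Proof. exact: HG.2. Qed.

Lemma GmeasP {f : T -> R} : G_measurable G f <-> measurable_fun [set: TG] (f : TG -> R).
Proof.
split=> [Gf _ B mB|mf B mB]; first by rewrite setTI measG; exact: Gf.
by have := mf measurableT B mB; rewrite setTI measG.
Qed.

Lemma GmeasT {f : T -> R} : G_measurable G f -> measurable_fun [set: T] f.
Proof. by move=> Gf _ B mB; rewrite setTI; apply: G_meas; exact: Gf. Qed.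

Lemma mid : measurable_fun [set: T] (id : T -> TG).
Proof. by move=> _ B; rewrite measG setTI => /G_meas. Qed.

Definition PG (_ : is_sub_sigma_alg G) := pushforward P (id : T -> TG).
Local Notation PGm := (PG HG).

Let PG0 : PGm set0 = 0%E.
Proof. by rewrite /PG /pushforward preimage_set0 measure0. Qed.

Let PG_ge0 A : (0 <= PGm A)%E.
Proof. exact: (measure_ge0 P). Qed.

Let PG_sa : semi_sigma_additive PGm.
Proof.
move=> F mF tF mUF; rewrite /PG /pushforward preimage_bigcup.
apply: measure_semi_sigma_additive.
- by move=> n; rewrite -[X in measurable X]setTI; exact: mid.
- apply/trivIsetP => /= i j _ _ ij; rewrite -preimage_setI.
  by move/trivIsetP : tF => /(_ _ _ _ _ ij) ->//; rewrite preimage_set0.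
- by rewrite -preimage_bigcup -[X in measurable X]setTI; exact: mid.
Qed.

HB.instance Definition _ := isMeasure.Build _ _ _ PGm PG0 PG_ge0 PG_sa.

Lemma intPG {A : set T} {f : T -> \bar R} : G A ->
  measurable_fun [set: TG] f -> P.-integrable A f ->
  (\int[PGm]_(x in A) f x = \int[P]_(x in A) f x)%E.
Proof.
move=> GA mf intf.
rewrite /PG (@integral_pushforward _ _ T TG R id mid P A f mf intf) //.
by rewrite measG.
Qed.

Lemma integrablePG {A : set T} {f : T -> \bar R} : G A ->
  measurable_fun [set: TG] f -> P.-integrable A f ->
  PGm.-integrable A f.
Proof.
move=> GA mf intf.
apply: (@integrable_pushforward _ _ T TG R id mid P A f mf intf).
by rewrite measG.
Qed.

Lemma aePG (Q : T -> Prop) : {ae PGm, forall x, Q x} -> {ae P, forall x, Q x}.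
Proof.
case=> N [mN PN sub]; exists N; split => //.
by move: mN; rewrite measG => /G_meas.
Qed.

End S.
Section S2.
Context {d : measure_display} {T : measurableType d} {R : realType}
  (P : probability T R) {G : set (set T)} (HG : is_sub_sigma_alg G).
Local Notation TG := (g_sigma_algebraType G).
Local Notation PG := (@PG _ _ _ P G HG).

Lemma GT : G setT.
Proof. by rewrite -(measG HG); exact: (@measurableT _ TG). Qed.

Lemma ce_uniq {Z1 Z2 : T -> R} : G_measurable G Z1 -> G_measurable G Z2 ->
  P.-integrable setT (EFin \o Z1) -> P.-integrable setT (EFin \o Z2) ->
  (forall A, G A -> \int[P]_(x in A) (Z1 x)%:E = \int[P]_(x in A) (Z2 x)%:E)%E ->
  {ae P, forall x, Z1 x = Z2 x}.
Proof.
move=> /(GmeasP HG) m1 /(GmeasP HG) m2 i1 i2 eq.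
apply: (aePG P HG).
have mE1 : measurable_fun [set: TG] (EFin \o Z1) by exact/measurable_EFinP.
have mE2 : measurable_fun [set: TG] (EFin \o Z2) by exact/measurable_EFinP.
have ae : ae_eq PG setT (EFin \o Z1) (EFin \o Z2).
  have iP := integrablePG P HG GT mE1 i1.
  have := @integral_ae_eq _ TG R PG setT measurableT (EFin \o Z2) (EFin \o Z1) iP mE2.
  apply => E _ mE.
  move: (mE); rewrite (measG HG) => GE.
  rewrite !(intPG P HG GE) //.
  - exact: eq.
  - exact: integrableS measurableT (G_meas HG GE) (subsetT _) i2.
  - exact: integrableS measurableT (G_meas HG GE) (subsetT _) i1.
by apply: filterS ae => x /(_ I) [].
Qed.
End S2.
Section S3.
Context {d : measure_display} {T : measurableType d} {R : realType}
  (P : probability T R) {G : set (set T)} (HG : is_sub_sigma_alg G).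
Local Notation TG := (g_sigma_algebraType G).

Definition Lv (e : R) (b : T -> R) (j : int) : set T :=
  [set x | (j%:~R <= e * b x) && (e * b x < (j + 1)%:~R)].

Definition bn (e : R) (b : T -> R) (s : seq int) (x : T) : R :=
  \sum_(j <- s) (j%:~R / e) * \1_(Lv e b j) x.

Lemma Lv_G e b j : G_measurable G b -> G (Lv e b j).
Proof.
move=> /(GmeasP HG) mb.
have mc : measurable_fun [set: TG] (fun x => e * b x : R).
  by apply: measurable_funM => //; exact: measurable_cst.
have := mc measurableT `[j%:~R, (j + 1)%:~R[%classic (measurable_itv _).
rewrite setTI (measG HG).
congr G; apply/seteqP; split => x /=; by rewrite in_itv /=.
Qed.

Lemma Lv_floor e b j x : (x \in Lv e b j) = (Num.floor (e * b x) == j).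
Proof.
apply/idP/eqP => [/set_mem /andP[h1 h2]|<-].
  by apply: floor_def; rewrite h1 h2.
by apply: mem_set; rewrite /Lv /= floor_le floorD1_gt.
Qed.

Lemma sum_single (s : seq int) (j0 : int) (F : int -> R) :
  uniq s -> j0 \in s ->
  \sum_(j <- s) F j * (j == j0)%:R = F j0.
Proof.
move=> us js; rewrite (bigD1_seq j0) //= eqxx mulr1 big1 ?addr0 //.
by move=> j /negbTE ->; rewrite mulr0.
Qed.

End S3.
Section S4.
Context {d : measure_display} {T : measurableType d} {R : realType}
  (P : probability T R) {G : set (set T)} (HG : is_sub_sigma_alg G).
Local Notation TG := (g_sigma_algebraType G).

Lemma GI A B : G A -> G B -> G (A `&` B).
Proof.
move=> GA GB; have : measurable (A `&` B : set TG).
  by apply: measurableI; rewrite (measG HG).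
by rewrite (measG HG).
Qed.

Lemma ind_int (A L : set T) (D : T -> R) :
  (\int[P]_(x in A) (\1_L x * D x)%:E = \int[P]_(x in A `&` L) (D x)%:E)%E.
Proof.
rewrite integral_mkcondr; apply: eq_integral => x _.
by rewrite patchE indicE; case: (x \in L); rewrite ?mul1r ?mul0r.
Qed.

Lemma intMr {h D : T -> R} {A : set T} {M} : measurable A ->
  measurable_fun setT h -> (forall x, `|h x| <= M) ->
  P.-integrable A (EFin \o D) -> P.-integrable A (fun x => (h x * D x)%:E).
Proof.
move=> mA mh hM iD.
have := @integrableMr _ _ _ P A mA h (EFin \o D) (measurable_funS measurableT (subsetT _) mh) _ iD.
move=> /(_ _) H.
apply: (eq_integrable mA _ _ _ (H _)) => [x _ /=|]; first by rewrite EFinM.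
exists M; split; first exact: num_real.
by move=> y My x _; apply: le_trans (hM x) (ltW My).
Qed.

Lemma s_uniq (N M : nat) : uniq [seq (k%:Z - N%:Z) | k <- iota 0 M].
Proof.
rewrite map_inj_uniq ?iota_uniq // => k1 k2 h; lia.
Qed.

Lemma natz_R (N : nat) : (N%:Z)%:~R = N%:R :> R.
Proof. by rewrite pmulrn. Qed.

Lemma floor_in {y C e : R} : `|y| <= C -> 0 < e ->
  Num.floor (e * y) \in [seq (k%:Z - ((Num.truncn (e * C)).+1)%:Z)
                          | k <- iota 0 ((Num.truncn (e * C)).+1 + (Num.truncn (e * C)).+1).+1].
Proof.
move=> yC e0.
set N := (Num.truncn (e * C)).+1.
set z := Num.floor (e * y).
have h1 : z%:~R <= e * y := floor_le _.
have h2 : e * y < (z + 1)%:~R := floorD1_gt _.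
have t1 : e * C < N%:R := truncnS_gt _.
have y1 : e * y <= e * C by rewrite ler_pM2l //; exact: le_trans (ler_norm _) yC.
have y2 : - (e * C) <= e * y.
  rewrite -mulrN ler_pM2l // lerNl; apply: le_trans yC.
  by rewrite -normrN ler_norm.
rewrite intrD in h2.
have r1 : (z%:~R : R) < N%:R by lra.
have r2 : - (N%:R) < (z%:~R : R) + 1 by lra.
have zN : z < N%:Z by rewrite -(ltr_int R) natz_R.
have zN' : - (N%:Z) < z + 1.
  by rewrite -(ltr_int R) intrD mulrNz natz_R.
clearbody z N.
apply/mapP; exists (absz (z + N%:Z)); last by lia.
rewrite mem_iota; lia.
Qed.

End S4.
Section S5.
Context {d : measure_display} {T : measurableType d} {R : realType}
  (P : probability T R) {G : set (set T)} (HG : is_sub_sigma_alg G).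
Local Notation TG := (g_sigma_algebraType G).

Lemma pullout {b D : T -> R} {C : R} : G_measurable G b ->
  (forall x, `|b x| <= C) -> measurable_fun setT D ->
  P.-integrable setT (EFin \o D) ->
  (forall A, G A -> \int[P]_(x in A) (D x)%:E = 0)%E ->
  forall A, G A -> (\int[P]_(x in A) (b x * D x)%:E = 0)%E.
Proof.
move=> Gb bC mD iD D0 A GA.
have mA := G_meas HG GA.
have mb := GmeasT HG Gb.
have iDA : P.-integrable A (EFin \o D) := integrableS measurableT mA (subsetT _) iD.
have mDA : measurable_fun A D := measurable_funS measurableT (subsetT _) mD.
have key : forall e, 0 < e -> (`|\int[P]_(x in A) (b x * D x)%:E| <=
    e^-1%:E * \int[P]_(x in A) `|(D x)%:E|)%E.
  move=> e e0.
  set N := (Num.truncn (e * C)).+1.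
  set s := [seq (k%:Z - N%:Z) | k <- iota 0 (N + N).+1].
  set c := bn e b s.
  have us : uniq s := s_uniq _ _.
  have ceq x : c x = (Num.floor (e * b x))%:~R / e.
    rewrite /c /bn -(@sum_single _ _ _ (fun j : int => j%:~R / e) us (floor_in (bC x) e0)).
    by apply: eq_bigr => j _; rewrite indicE Lv_floor eq_sym.
  have close x : `|b x - c x| <= e^-1.
    rewrite ceq.
    have -> : b x - (Num.floor (e * b x))%:~R / e =
        (e * b x - (Num.floor (e * b x))%:~R) * e^-1.
      by field; rewrite gt_eqF.
    have h1 := floor_le (e * b x). have h2 := floorD1_gt (e * b x).
    rewrite normrM (@gtr0_norm _ e^-1) ?invr_gt0 // -[X in _ <= X]mul1r.
    apply: ler_wpM2r; first by rewrite invr_ge0 ltW.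
    rewrite ger0_norm; last by rewrite subr_ge0.
    move: h2; rewrite intrD; lra.
  have mLv j : measurable (Lv e b j) := G_meas HG (Lv_G HG _ _ _ Gb).
  have mc : measurable_fun setT c.
    apply: measurable_sum => j; apply: measurable_funM.
      exact: measurable_cst.
    exact: measurable_indic.
  have cM x : `|c x| <= C + e^-1.
    have -> : c x = b x - (b x - c x) by rewrite subKr.
    by apply: le_trans (ler_normB _ _) _; apply: lerD.
  have ic : P.-integrable A (fun x => (c x * D x)%:E) := intMr P mA mc cM iDA.
  have ib : P.-integrable A (fun x => (b x * D x)%:E) := intMr P mA mb bC iDA.
  have iL j : P.-integrable A (fun x => (\1_(Lv e b j) x * D x)%:E).
    apply: (intMr P mA (measurable_indic (mLv j)) _ iDA) => x.
    by rewrite indicE; case: (x \in _); rewrite ?normr1 ?normr0.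
  have c0 : (\int[P]_(x in A) (c x * D x)%:E = 0)%E.
    have -> : (fun x => (c x * D x)%:E) = fun x =>
        (\sum_(j <- s) ((j%:~R / e)%:E * (\1_(Lv e b j) x * D x)%:E))%E.
      apply/funext => x; rewrite /c /bn mulr_suml sumEFin.
      by congr EFin; apply: eq_bigr => j _; rewrite mulrA.
    rewrite integral_sum //; last by move=> j; exact: integrableZl.
    apply: big1 => j _; rewrite integralZl // ind_int D0 ?mule0 //.
    exact: GI GA (Lv_G HG _ _ _ Gb).
  have -> : (\int[P]_(x in A) (b x * D x)%:E =
      \int[P]_(x in A) ((b x - c x) * D x)%:E)%E.
    rewrite -[LHS]sube0 -c0 -integralB //; apply: eq_integral => x _.
    by rewrite -EFinB mulrBl.
  have mbcD : measurable_fun A (fun x => ((b x - c x) * D x)%:E).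
    apply/measurable_EFinP; apply: measurable_funM => //.
    apply: measurable_funB.
      exact: measurable_funS measurableT (subsetT _) mb.
    exact: measurable_funS measurableT (subsetT _) mc.
  apply: le_trans (le_abse_integral _ _ mbcD) _ => //.
  rewrite -ge0_integralZl_EFin //; last by rewrite invr_ge0 ltW.
  - apply: ge0_le_integral => //.
    + by apply: measurableT_comp.
    + apply: emeasurable_funM; first exact: measurable_cst.
      by apply: measurableT_comp => //; apply/measurable_EFinP.
    + move=> x _; rewrite /= -EFinM lee_fin normrM.
      by apply: ler_wpM2r => //.
  - by apply: measurableT_comp => //; apply/measurable_EFinP.
have ib : P.-integrable A (fun x => (b x * D x)%:E) := intMr P mA mb bC iDA.
have fI := integrable_fin_num mA ib.
have K0 : (0 <= \int[P]_(x in A) `|(D x)%:E|)%E by apply: integral_ge0.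
have fK : (\int[P]_(x in A) `|(D x)%:E|)%E \is a fin_num.
  rewrite ge0_fin_numE //; exact: (integrableP _ _ _ iDA).2.
have k0 := fine_ge0 K0.
move: key fI fK k0.
set I := (\int[P]_(x in A) (b x * D x)%:E)%E.
set K := (\int[P]_(x in A) `|(D x)%:E|)%E.
move=> key fI fK k0.
rewrite -(fineK fI).
move: key; rewrite -(fineK fI) -(fineK fK).
set i := fine I; set k := fine K => key.
congr EFin; case: (eqVneq i 0) => [//|inz]; exfalso.
have ip : 0 < `|i| by rewrite normr_gt0.
have e0 : 0 < (k + 1) / `|i| by rewrite divr_gt0 // ltr_wpDl.
have k0' : 0 <= k by [].
have := key _ e0; rewrite /= lee_fin invf_div mulrAC ler_pdivlMr; last lra.
nra.
Qed.

End S5.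
Section S6.
Context {d : measure_display} {T : measurableType d} {R : realType}
  (P : probability T R) {G : set (set T)} (HG : is_sub_sigma_alg G).
Local Notation TG := (g_sigma_algebraType G).

Definition CE (Y Z : T -> R) := [/\ measurable_fun setT Y,
  P.-integrable setT (EFin \o Y), G_measurable G Z,
  P.-integrable setT (EFin \o Z) &
  forall A, G A -> (\int[P]_(x in A) (Z x)%:E = \int[P]_(x in A) (Y x)%:E)%E].

Lemma CE_ext {Y Z Y' Z'} : (forall x, Y x = Y' x) -> (forall x, Z x = Z' x) ->
  CE Y Z -> CE Y' Z'.
Proof.
move=> e1 e2; have -> : Y' = Y by apply/funext => x; rewrite e1.
by have -> : Z' = Z by apply/funext => x; rewrite e2.
Qed.

Lemma CE0 : CE (fun _ => 0) (fun _ => 0).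
Proof.
split.
- exact: measurable_cst.
- exact: (integrable0 P setT).
- by apply/(GmeasP HG); exact: measurable_cst.
- exact: (integrable0 P setT).
- by [].
Qed.

Lemma CE_add {Y1 Z1 Y2 Z2} : CE Y1 Z1 -> CE Y2 Z2 ->
  CE (fun x => Y1 x + Y2 x) (fun x => Z1 x + Z2 x).
Proof.
move=> [mY1 iY1 GZ1 iZ1 e1] [mY2 iY2 GZ2 iZ2 e2]; split.
- exact: measurable_funD.
- have -> : EFin \o (fun x => Y1 x + Y2 x) = ((EFin \o Y1) \+ (EFin \o Y2))%E.
    by apply/funext => x; rewrite /= EFinD.
  exact: integrableD.
- apply/(GmeasP HG); apply: measurable_funD; exact/(GmeasP HG).
- have -> : EFin \o (fun x => Z1 x + Z2 x) = ((EFin \o Z1) \+ (EFin \o Z2))%E.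
    by apply/funext => x; rewrite /= EFinD.
  exact: integrableD.
- move=> A GA; have mA := G_meas HG GA.
  have iS f : P.-integrable setT f -> P.-integrable A f.
    exact: integrableS measurableT mA (subsetT _).
  under eq_integral do rewrite EFinD.
  under [RHS]eq_integral do rewrite EFinD.
  rewrite integralD //; try exact: iS.
  rewrite integralD //; try exact: iS.
  by rewrite e1 // e2.
Qed.

Lemma CE_pull {Y Z b C} : CE Y Z -> G_measurable G b -> (forall x, `|b x| <= C) ->
  CE (fun x => b x * Y x) (fun x => b x * Z x).
Proof.
move=> [mY iY GZ iZ e] Gb bC.
have mb := GmeasT HG Gb.
have mZ := GmeasT HG GZ.
split.
- exact: measurable_funM.
- exact: (intMr P measurableT mb bC iY).
- apply/(GmeasP HG); apply: measurable_funM; exact/(GmeasP HG).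
- exact: (intMr P measurableT mb bC iZ).
- move=> A GA; have mA := G_meas HG GA.
  have iS f : P.-integrable setT f -> P.-integrable A f.
    exact: integrableS measurableT mA (subsetT _).
  have iD : P.-integrable setT (EFin \o (fun x => Z x - Y x)).
    have -> : EFin \o (fun x => Z x - Y x) = (fun x => (EFin \o Z) x - (EFin \o Y) x)%E.
      by apply/funext => x; rewrite /= EFinB.
    exact: integrableB.
  have hp : forall B, G B -> (\int[P]_(x in B) ((Z \- Y) x)%:E = 0)%E.
    move=> B GB; have mB := G_meas HG GB.
    rewrite (_ : (fun x => _) = (fun x => (Z x)%:E - (Y x)%:E)%E); last first.
      by apply/funext => x; rewrite EFinB.
    rewrite integralB //; last 2 first.
      exact: integrableS measurableT mB (subsetT _) iZ.
      exact: integrableS measurableT mB (subsetT _) iY.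
    rewrite e // subee //; apply: integrable_fin_num => //.
    exact: integrableS measurableT mB (subsetT _) iY.
  have := pullout P HG Gb bC (measurable_funB mZ mY) iD hp A GA.
  have ibZ := intMr P mA mb bC (iS _ iZ).
  have ibY := intMr P mA mb bC (iS _ iY).
  have fY := integrable_fin_num mA ibY.
  have -> : (fun x => (b x * (Z x - Y x))%:E) =
      (fun x => (b x * Z x)%:E - (b x * Y x)%:E)%E.
    by apply/funext => x; rewrite -EFinB mulrBr.
  rewrite integralB // => h.
  by rewrite -[LHS](subeK _ fY) h add0r.
Qed.

Lemma CE_sum {I : Type} (s : seq I) {Yf Zf : I -> T -> R} :
  (forall i, CE (Yf i) (Zf i)) ->
  CE (fun x => \sum_(i <- s) Yf i x) (fun x => \sum_(i <- s) Zf i x).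
Proof.
move=> h; elim: s => [|i s IH].
  by apply: CE_ext CE0 => x; rewrite big_nil.
by apply: CE_ext (CE_add (h i) IH) => x; rewrite big_cons.
Qed.

End S6.
Arguments CE {d T R} P G Y Z.
Section S7.
Context {d : measure_display} {T : measurableType d} {R : realType}
  (P : probability T R) {G : set (set T)} (HG : is_sub_sigma_alg G).
Local Notation TG := (g_sigma_algebraType G).

Lemma CE_mono {Y1 Z1 Y2 Z2} : CE P G Y1 Z1 -> CE P G Y2 Z2 ->
  (forall x, Y1 x <= Y2 x) -> {ae P, forall x, Z1 x <= Z2 x}.
Proof.
move=> c1 c2 Y12.
have c3 : CE P G (fun x => Y1 x - Y2 x) (fun x => Z1 x - Z2 x).
  have Gm1 : G_measurable G (fun _ : T => -1 : R).
    by apply/(GmeasP HG); exact: measurable_cst.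
  have bm1 : forall x : T, `|(fun _ : T => -1 : R) x| <= 1.
    by move=> x; rewrite normrN normr1.
  have c2' := CE_pull P HG c2 Gm1 bm1.
  by apply: (CE_ext P) (CE_add P HG c1 c2') => x; rewrite mulN1r.
have GZ1 := c1.
case: c1 c2 => _ _ GZ1' _ _ [_ _ GZ2' _ _].
pose E := [set x | Z2 x < Z1 x].
have GE : G E.
  have : measurable_fun [set: TG] (fun x => Z1 x - Z2 x : R).
    apply: measurable_funB; exact/(GmeasP HG).
  move=> /(_ measurableT `]0, +oo[%classic (measurable_itv _)).
  rewrite setTI (measG HG); congr G; apply/seteqP; split => x /=;
    by rewrite in_itv /= andbT subr_gt0.
have Gb : G_measurable G (\1_E : T -> R).
  apply/(GmeasP HG); apply: measurable_indic; by rewrite (measG HG).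
have bC x : `|(\1_E x : R)| <= 1.
  by rewrite indicE; case: (x \in _); rewrite ?normr1 ?normr0.
have [mY iY _ iZ e] := CE_pull P HG c3 Gb bC.
have h0 x : 0 <= \1_E x * (Z1 x - Z2 x).
  rewrite indicE; case: (boolP (x \in E)) => [/set_mem /= xE|_].
    by rewrite mul1r subr_ge0 ltW.
  by rewrite mul0r.
have mZ : measurable_fun setT (fun x => \1_E x * (Z1 x - Z2 x)).
  exact/measurable_EFinP/(measurable_int P iZ).
have int0 : (\int[P]_(x in setT) `|(\1_E x * (Z1 x - Z2 x))%:E| = 0)%E.
  under eq_integral do rewrite abse_EFin ger0_norm //.
  apply/eqP; rewrite eq_le; apply/andP; split; last by apply: integral_ge0 => x _; rewrite lee_fin h0.
  rewrite (e _ (GT HG)).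
  rewrite -(integral0 P setT); apply: le_integral => //.
    exact: integrable0.
  move=> x _; rewrite /= lee_fin; rewrite indicE; case: (x \in E).
    by rewrite mul1r subr_le0.
  by rewrite mul0r.
have := (ae_eq_integral_abs P measurableT _).1 int0.
move=> /(_ _); case; first by apply/measurable_EFinP.
move=> N [mN PN sub]; exists N; split => // x /= nx; apply: sub => /=.
move=> /(_ I) [] /eqP; rewrite mulf_eq0 subr_eq0 => /orP[|/eqP e12].
  rewrite indicE pnatr_eq0 eqb0 => /negP xE; apply: nx.
  rewrite leNgt; apply/negP => yE; apply: xE; exact: mem_set.
by apply: nx; rewrite e12.
Qed.

End S7.
Section Alg.
Context {R : realType}.

Definition pp (x : R) := Num.max x 0.
Definition nn (x : R) := Num.max (- x) 0.

Lemma pp_nn_ge {a : R} : 0 <= a -> pp a = a /\ nn a = 0.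
Proof.
move=> a0; rewrite /pp /nn; split; first exact/max_idPl.
by apply/max_idPr; rewrite oppr_le0.
Qed.

Lemma pp_nn_lt {a : R} : a < 0 -> pp a = 0 /\ nn a = - a.
Proof.
move=> a0; rewrite /pp /nn; split; first exact/max_idPr/ltW.
by apply/max_idPl; rewrite oppr_ge0 ltW.
Qed.

Lemma imul1 (a : R) (v : R * R) : v.1 <= v.2 ->
  (imul (a, a) v).1 = pp a * v.1 - nn a * v.2.
Proof.
move=> h; rewrite /imul /= !minxx; case: (lerP 0 a) => a0.
  have [-> ->] := pp_nn_ge a0.
  by rewrite mul0r subr0; apply/min_idPl; rewrite ler_wpM2l.
have [-> ->] := pp_nn_lt a0.
rewrite mul0r sub0r mulNr opprK; apply/min_idPr.
by rewrite ler_wnM2l // ltW.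
Qed.

Lemma imul2 (a : R) (v : R * R) : v.1 <= v.2 ->
  (imul (a, a) v).2 = pp a * v.2 - nn a * v.1.
Proof.
move=> h; rewrite /imul /= !maxxx; case: (lerP 0 a) => a0.
  have [-> ->] := pp_nn_ge a0.
  by rewrite mul0r subr0; apply/max_idPr; rewrite ler_wpM2l.
have [-> ->] := pp_nn_lt a0.
rewrite mul0r sub0r mulNr opprK; apply/max_idPl.
by rewrite ler_wnM2l // ltW.
Qed.

Lemma foldr_fst (s : seq (R * R)) : (foldr (@iadd R) (izero R) s).1 = \sum_(u <- s) u.1.
Proof. by elim: s => [|u s IH]; rewrite ?big_nil ?big_cons //= IH. Qed.

Lemma foldr_snd (s : seq (R * R)) : (foldr (@iadd R) (izero R) s).2 = \sum_(u <- s) u.2.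
Proof. by elim: s => [|u s IH]; rewrite ?big_nil ?big_cons //= IH. Qed.

Lemma inmul_fst n (u : R * R) : (inmul n u).1 = n%:R * u.1.
Proof.
rewrite mulr_natl; elim: n => [|n IH] //=.
by rewrite mulrS -IH.
Qed.

Lemma inmul_snd n (u : R * R) : (inmul n u).2 = n%:R * u.2.
Proof.
rewrite mulr_natl; elim: n => [|n IH] //=.
by rewrite mulrS -IH.
Qed.

Lemma mom_fst m (u v : mom R m) (k : 'I_m.+1) : (mom_mul u v k).1 =
  \sum_(i <- iota 0 k.+1) 'C(k, i)%:R * (imul (u (inord i)) (v (inord (k - i)))).1.
Proof. by rewrite /mom_mul foldr_fst big_map; apply: eq_bigr => i _; rewrite inmul_fst. Qed.

Lemma mom_snd m (u v : mom R m) (k : 'I_m.+1) : (mom_mul u v k).2 =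
  \sum_(i <- iota 0 k.+1) 'C(k, i)%:R * (imul (u (inord i)) (v (inord (k - i)))).2.
Proof. by rewrite /mom_mul foldr_snd big_map; apply: eq_bigr => i _; rewrite inmul_snd. Qed.

End Alg.
Definition F1 {R : realType} {T : Type} {m : nat} (c : 'I_m.+1 -> T -> R)
  (V : T -> mom R m) (k : 'I_m.+1) (w : T) : R :=
  \sum_(i <- iota 0 k.+1) 'C(k, i)%:R * (pp (c (inord i) w) * (V w (inord (k - i))).1
     - nn (c (inord i) w) * (V w (inord (k - i))).2).

Definition F2 {R : realType} {T : Type} {m : nat} (c : 'I_m.+1 -> T -> R)
  (V : T -> mom R m) (k : 'I_m.+1) (w : T) : R :=
  \sum_(i <- iota 0 k.+1) 'C(k, i)%:R * (pp (c (inord i) w) * (V w (inord (k - i))).2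
     - nn (c (inord i) w) * (V w (inord (k - i))).1).

Section S9.
Context {R : realType} {T : Type} {m : nat}.

Lemma momF1 (a : 'I_m.+1 -> T -> R) (X V : T -> mom R m) w k :
  (forall k, X w k = (a k w, a k w)) -> (forall l, (V w l).1 <= (V w l).2) ->
  (mom_mul (X w) (V w) k).1 = F1 a V k w.
Proof.
move=> HX HV; rewrite mom_fst /F1; apply: eq_bigr => i _.
by rewrite HX imul1.
Qed.

Lemma momF2 (a : 'I_m.+1 -> T -> R) (X V : T -> mom R m) w k :
  (forall k, X w k = (a k w, a k w)) -> (forall l, (V w l).1 <= (V w l).2) ->
  (mom_mul (X w) (V w) k).2 = F2 a V k w.
Proof.
move=> HX HV; rewrite mom_snd /F2; apply: eq_bigr => i _.
by rewrite HX imul2.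
Qed.

Lemma F1_ext (c c' : 'I_m.+1 -> T -> R) V k w : (forall i, c i w = c' i w) ->
  F1 c V k w = F1 c' V k w.
Proof. by move=> h; rewrite /F1; apply: eq_bigr => i _; rewrite !h. Qed.

Lemma F2_ext (c c' : 'I_m.+1 -> T -> R) V k w : (forall i, c i w = c' i w) ->
  F2 c V k w = F2 c' V k w.
Proof. by move=> h; rewrite /F2; apply: eq_bigr => i _; rewrite !h. Qed.

Lemma pp_bd {x M : R} : `|x| <= M -> `|pp x| <= M.
Proof.
move=> h; have M0 : 0 <= M := le_trans (normr_ge0 _) h.
case: (lerP 0 x) => x0; first by have [-> _] := pp_nn_ge x0.
by have [-> _] := pp_nn_lt x0; rewrite normr0.
Qed.

Lemma nn_bd {x M : R} : `|x| <= M -> `|- nn x| <= M.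
Proof.
move=> h; have M0 : 0 <= M := le_trans (normr_ge0 _) h.
rewrite normrN; case: (lerP 0 x) => x0; first by have [_ ->] := pp_nn_ge x0; rewrite normr0.
by have [_ ->] := pp_nn_lt x0; rewrite normrN.
Qed.

End S9.

Section S10.
Context {d : measure_display} {T : measurableType d} {R : realType}
  (P : probability T R) {G : set (set T)} (HG : is_sub_sigma_alg G) {m : nat}.
Local Notation TG := (g_sigma_algebraType G).

Lemma meas_pp (f : T -> R) : measurable_fun setT f ->
  measurable_fun setT (fun w => pp (f w)).
Proof. by move=> mf; apply: measurable_maxr => //; exact: measurable_cst. Qed.

Lemma meas_nn (f : T -> R) : measurable_fun setT f ->
  measurable_fun setT (fun w => nn (f w)).
Proof.
move=> mf; apply: measurable_maxr; last exact: measurable_cst.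
exact: measurable_funN.
Qed.

Lemma F1_meas (c : 'I_m.+1 -> T -> R) (V : T -> mom R m) k :
  (forall i, measurable_fun setT (c i)) ->
  (forall l, measurable_fun setT (fun w => (V w l).1)) ->
  (forall l, measurable_fun setT (fun w => (V w l).2)) ->
  measurable_fun setT (F1 c V k).
Proof.
move=> mc m1 m2; apply: measurable_sum => i.
apply: measurable_funM; first exact: measurable_cst.
apply: measurable_funB; apply: measurable_funM => //.
- exact: meas_pp.
- exact: meas_nn.
Qed.

Lemma F2_meas (c : 'I_m.+1 -> T -> R) (V : T -> mom R m) k :
  (forall i, measurable_fun setT (c i)) ->
  (forall l, measurable_fun setT (fun w => (V w l).1)) ->
  (forall l, measurable_fun setT (fun w => (V w l).2)) ->
  measurable_fun setT (F2 c V k).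
Proof.
move=> mc m1 m2; apply: measurable_sum => i.
apply: measurable_funM; first exact: measurable_cst.
apply: measurable_funB; apply: measurable_funM => //.
- exact: meas_pp.
- exact: meas_nn.
Qed.

Lemma G_pp {f : T -> R} : G_measurable G f -> G_measurable G (fun w => pp (f w)).
Proof.
move=> /(GmeasP HG) mf; apply/(GmeasP HG).
by apply: measurable_maxr => //; exact: measurable_cst.
Qed.

Lemma G_nn {f : T -> R} : G_measurable G f -> G_measurable G (fun w => - nn (f w)).
Proof.
move=> /(GmeasP HG) mf; apply/(GmeasP HG); apply: measurable_funN.
apply: measurable_maxr; last exact: measurable_cst.
exact: measurable_funN.
Qed.

Lemma G_cst (r : R) : G_measurable G (fun _ : T => r).
Proof. by apply/(GmeasP HG); exact: measurable_cst. Qed.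

Lemma CE_F1 (c : 'I_m.+1 -> T -> R) (Y Z : T -> mom R m) k M :
  (forall i, G_measurable G (c i)) -> (forall i w, `|c i w| <= M) ->
  (forall l, CE P G (fun w => (Y w l).1) (fun w => (Z w l).1)) ->
  (forall l, CE P G (fun w => (Y w l).2) (fun w => (Z w l).2)) ->
  CE P G (F1 c Y k) (F1 c Z k).
Proof.
move=> Gc cM c1 c2.
have bk (i : nat) (w : T) : `|(fun _ : T => 'C(k, i)%:R : R) w| <= 'C(k, i)%:R.
  by rewrite ger0_norm.
have t := CE_sum P HG (iota 0 k.+1) (fun i =>
  CE_pull P HG (CE_add P HG
    (CE_pull P HG (c1 (inord (k - i))) (G_pp (Gc (inord i))) (fun w => pp_bd (cM (inord i) w)))
    (CE_pull P HG (c2 (inord (k - i))) (G_nn (Gc (inord i))) (fun w => nn_bd (cM (inord i) w))))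
  (G_cst _) (bk i)).

apply: (CE_ext P _ _ t) => w; rewrite /F1; apply: eq_bigr => i _; by rewrite mulNr.
Qed.

Lemma CE_F2 (c : 'I_m.+1 -> T -> R) (Y Z : T -> mom R m) k M :
  (forall i, G_measurable G (c i)) -> (forall i w, `|c i w| <= M) ->
  (forall l, CE P G (fun w => (Y w l).1) (fun w => (Z w l).1)) ->
  (forall l, CE P G (fun w => (Y w l).2) (fun w => (Z w l).2)) ->
  CE P G (F2 c Y k) (F2 c Z k).
Proof.
move=> Gc cM c1 c2.
have bk (i : nat) (w : T) : `|(fun _ : T => 'C(k, i)%:R : R) w| <= 'C(k, i)%:R.
  by rewrite ger0_norm.
apply: (CE_ext P) (CE_sum P HG (iota 0 k.+1) (fun i =>
  CE_pull P HG (CE_add P HG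
    (CE_pull P HG (c2 (inord (k - i))) (G_pp (Gc (inord i))) (fun w => pp_bd (cM (inord i) w)))
    (CE_pull P HG (c1 (inord (k - i))) (G_nn (Gc (inord i))) (fun w => nn_bd (cM (inord i) w))))
  (G_cst _) (bk i))) => w; rewrite /F2; apply: eq_bigr => i _; by rewrite mulNr.
Qed.

Lemma ae_ord {n} (Q : 'I_n -> T -> Prop) :
  (forall i, {ae P, forall w, Q i w}) -> {ae P, forall w, forall i, Q i w}.
Proof.
move=> h.
have : forall s : seq 'I_n, {ae P, forall w, forall i, i \in s -> Q i w}.
  elim=> [|i s IH]; first by apply: aeW => w i.
  apply: filterS2 (h i) IH => w qi qs j; rewrite in_cons => /orP[/eqP -> //|].
  exact: qs.
move=> /(_ (enum 'I_n)); apply: filterS => w q i; apply: q.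
by rewrite mem_enum.
Qed.

Lemma ae_and {A B : T -> Prop} : {ae P, forall w, A w} -> {ae P, forall w, B w} ->
  {ae P, forall w, A w /\ B w}.
Proof. by apply: filterS2 => w. Qed.

Lemma int_ae {A : set T} {f g : T -> R} : measurable A -> measurable_fun setT f ->
  measurable_fun setT g -> {ae P, forall x, f x = g x} ->
  (\int[P]_(x in A) (f x)%:E = \int[P]_(x in A) (g x)%:E)%E.
Proof.
move=> mA mf mg ae; apply: ae_eq_integral => //.
- by apply/measurable_EFinP; exact: measurable_funS mf.
- by apply/measurable_EFinP; exact: measurable_funS mg.
- by apply: filterS ae => x /= -> _.
Qed.

End S10.
Theorem lemmaE5 (d : measure_display) (T : measurableType d) (R : realType)
  (P : probability T R) (G : set (set T)) (m : nat)
  (a : 'I_m.+1 -> T -> R) (X Y : T -> mom R m) :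
  is_sub_sigma_alg G ->
  (* X is degenerate, G-measurable and almost surely bounded *)
  (forall w k, X w k = (a k w, a k w)) ->
  (forall k, G_measurable G (a k)) ->
  (exists C : R, {ae P, forall w, forall k, `|a k w| <= C}) ->
  (* Y is a random variable with values in M_I^(m), integrable endpoints *)
  (forall w k, itv_ok (Y w k)) ->
  (forall k, measurable_fun setT (fun w => (Y w k).1)) ->
  (forall k, measurable_fun setT (fun w => (Y w k).2)) ->
  (forall k, P.-integrable setT (fun w => ((Y w k).1)%:E)) ->
  (forall k, P.-integrable setT (fun w => ((Y w k).2)%:E)) ->
  (* for any versions of E[X (x) Y | G] and E[Y | G] *)
  forall W Z : T -> mom R m,
  is_cond_exp_mom P G (fun w => mom_mul (X w) (Y w)) W ->
  is_cond_exp_mom P G Y Z ->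
  {ae P, forall w, W w = mom_mul (X w) (Z w)}.
Proof.
move=> HG HX Ga [C aeC] Yok mY1 mY2 iY1 iY2 W Z hW hZ.
have [C' [C'0 CC']] : exists C' : R, 0 <= C' /\ C <= C'.
  by exists `|C|; split; [exact: normr_ge0 | exact: ler_norm].
pose a' i w := Num.max (- C') (Num.min (a i w) C').
have Ga' i : G_measurable G (a' i).
  apply/(GmeasP HG).
  exact: (measurable_maxr (measurable_cst (- C'))
    (measurable_minr ((GmeasP HG).1 (Ga i)) (measurable_cst C'))).
have a'M i w : `|a' i w| <= C'.
  rewrite ler_norml /a' le_max lexx /= ge_max ge_min lexx orbT andbT.
  lra.
have a'a : {ae P, forall w, forall i, a' i w = a i w}.
  apply: filterS aeC => w h i; rewrite /a'.
  have := h i; rewrite ler_norml => /andP[h1 h2].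
  rewrite (min_idPl _); last by apply: le_trans h2 CC'.
  by apply/max_idPr; rewrite lerNl; apply: le_trans CC'; rewrite lerNl.
have cY1 l : CE P G (fun w => (Y w l).1) (fun w => (Z w l).1).
  by case: (hZ l) => [[GZ iZ eZ] _]; split; [exact: mY1 | exact: iY1 | exact: GZ | exact: iZ | exact: eZ].
have cY2 l : CE P G (fun w => (Y w l).2) (fun w => (Z w l).2).
  by case: (hZ l) => [_ [GZ iZ eZ]]; split; [exact: mY2 | exact: iY2 | exact: GZ | exact: iZ | exact: eZ].
have Zle : {ae P, forall w, forall l, (Z w l).1 <= (Z w l).2}.
  apply: (ae_ord P (fun l w => (Z w l).1 <= (Z w l).2)) => l.
  exact: (CE_mono P HG (cY1 l) (cY2 l) (fun w => Yok w l)).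
have ma i : measurable_fun setT (a i) := GmeasT HG (Ga i).
have ma' i : measurable_fun setT (a' i) := GmeasT HG (Ga' i).
have aeW1 k : {ae P, forall w, (W w k).1 = F1 a' Z k w}.
  case: (hW k) => [[GW iW eW] _].
  case: (CE_F1 P HG a' Y Z k C' Ga' a'M cY1 cY2) => mF iF GF iFZ eF.
  apply: (ce_uniq P HG GW GF iW iFZ) => A GA.
  rewrite eW // eF //.
  under eq_integral => x _ do rewrite (momF1 a X Y x k (HX x) (Yok x)).
  apply: (int_ae P (G_meas HG GA)).
  - exact: F1_meas.
  - exact: mF.
  by apply: filterS a'a => w h; apply: F1_ext => i; rewrite h.
have aeW2 k : {ae P, forall w, (W w k).2 = F2 a' Z k w}.
  case: (hW k) => [_ [GW iW eW]].
  case: (CE_F2 P HG a' Y Z k C' Ga' a'M cY1 cY2) => mF iF GF iFZ eF.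
  apply: (ce_uniq P HG GW GF iW iFZ) => A GA.
  rewrite eW // eF //.
  under eq_integral => x _ do rewrite (momF2 a X Y x k (HX x) (Yok x)).
  apply: (int_ae P (G_meas HG GA)).
  - exact: F2_meas.
  - exact: mF.
  by apply: filterS a'a => w h; apply: F2_ext => i; rewrite h.
have H1 := ae_ord P (fun k w => (W w k).1 = F1 a' Z k w) aeW1.
have H2 := ae_ord P (fun k w => (W w k).2 = F2 a' Z k w) aeW2.
apply: filterS (ae_and P (ae_and P a'a Zle) (ae_and P H1 H2)).
move=> w [[ea el] [w1 w2]]; apply/funext => k.
rewrite [W w k]surjective_pairing [mom_mul _ _ k]surjective_pairing.
rewrite w1 w2 (momF1 a X Z w k (HX w) el) (momF2 a X Z w k (HX w) el).
by rewrite (F1_ext _ _ _ _ _ ea) (F2_ext _ _ _ _ _ ea).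
Qed.
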